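(* Let $K$ be an oriented Legendrian knot and $(X,\ast,u,d)$ a finite block GL-rack, with blocks $A_1,\dots,A_n$ each of size $c$, induced GL-quandle $(\widetilde X,\tilde\ast,\tilde u,\tilde d)$ and projection $\pi\colon X\to\widetilde X$. If $\phi\in\operatorname{Hom}(\operatorname{GLR}(K),X)$ then $\pi\circ\phi\in\operatorname{Hom}(\operatorname{GLR}(K),\widetilde X)$. Furthermore, $$\operatorname{Col}_X(K)=\sum_{\psi\in\operatorname{Hom}(\operatorname{GLR}(K),\widetilde X)}|\operatorname{Lift}(\psi)|,$$ and for every such $\psi$, $|\operatorname{Lift}(\psi)|\in\{0,c\}$.
   Context: A rack is a set $X$ with a binary operation $\ast$ such that for every $y\in X$ the map $x\mapsto x\ast y$ is a bijection of $X$ and $(x\ast y)\ast z=(x\ast z)\ast(y\ast z)$ for all $x,y,z$. A GL-rack is a quadruple $(X,\ast,u,d)$ where $(X,\ast)$ is a rack and $u,d\colon X\to X$ are maps such that for all $x,y\in X$: $u(d(x\ast x))=d(u(x\ast x))=x$; $u(x\ast y)=u(x)\ast y$ and $d(x\ast y)=d(x)\ast y$; $x\ast u(y)=x\ast d(y)=x\ast y$. A GL-quandle is a GL-rack with $x\ast x=x$. Homomorphisms of GL-racks are maps preserving $\ast$, $u$, $d$. The diagonal map is $\Delta(x)=x\ast x$; for finite $X$ it is a bijection with $\Delta=(u\circ d)^{-1}$. A finite GL-rack is a block GL-rack if all cycles in the disjoint cycle decomposition $\Delta=\alpha_1\cdots\alpha_n$ (fixed points counted as $1$-cycles) have the same length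 $c$; the blocks are $A_i=\operatorname{supp}(\alpha_i)$. The induced GL-quandle is $\widetilde X=\{a_1,\dots,a_n\}$ with $\pi(A_i)=\{a_i\}$, $a_i\tilde\ast a_j=\pi(A_i\ast A_j)$, $\tilde u(a_i)=\pi(u(A_i))$, $\tilde d(a_i)=\pi(d(A_i))$ (these are well defined, each image being a single block). For $\psi\in\operatorname{Hom}(\operatorname{GLR}(K),\widetilde X)$, $\operatorname{Lift}(\psi)=\{\phi\in\operatorname{Hom}(\operatorname{GLR}(K),X):\pi\circ\phi=\psi\}$. Legendrian knots in $(\mathbb{R}^3,\xi_{\mathrm{std}})$ are represented by oriented front diagrams. The fundamental GL-rack $\operatorname{GLR}(K)$ is the GL-rack generated by the arcs of a front diagram $D$ of $K$ subject to: following the orientation through a cusp, the generator changes by $u$ (cusp traversed upward) or $d$ (traversed downward); at a crossing with over-arc $y$, the under-arc $x$ on the right of the oriented over-strand and the under-arc $z$ on its left satisfy $z=x\ast y$. For a finite GL-rack $Y$, $\operatorname{Col}_Y(K)=|\operatorname{Hom}(\operatorname{GLR}(K),Y)|$, the number of colorings of $D$ by $Y$ obeying these rules; it is a Legendrian isotopy invariant. *)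

(* Defs.v *)
From mathcomp Require Import all_boot.
Set Implicit Arguments.
Unset Strict Implicit.
Unset Printing Implicit Defensive.

Section GLRack.
Variable X : finType.
Variables (op : X -> X -> X) (u d : X -> X).

Definition is_rack : Prop :=
  (forall y, bijective (fun x => op x y)) /\
  (forall x y z, op (op x y) z = op (op x z) (op y z)).

Definition is_GLrack : Prop :=
  is_rack /\
  (forall x, u (d (op x x)) = x /\ d (u (op x x)) = x) /\
  (forall x y, u (op x y) = op (u x) y /\ d (op x y) = op (d x) y) /\
  (forall x y, op x (u y) = op x y /\ op x (d y) = op x y).

Definition Delta (x : X) : X := op x x.

Definition is_block (c : nat) : Prop := forall x, order Delta x = c.

Definition block (x : X) : {set X} := [set y | fconnect Delta x y].

Definition tX := {A : {set X} | [exists x, A == block x]}.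

Lemma tX_rep_ex (A : tX) : exists x, val A == block x.
Proof. exact: (existsP (valP A)). Qed.

Definition rep (A : tX) : X := xchoose (tX_rep_ex A).

Definition bpi (x : X) : tX :=
  exist _ (block x) (introT existsP (ex_intro _ x (eqxx (block x)))).

Definition top (A B : tX) : tX := bpi (op (rep A) (rep B)).
Definition tu (A : tX) : tX := bpi (u (rep A)).
Definition td (A : tX) : tX := bpi (d (rep A)).
End GLRack.

(* Arcs are numbered 0..n-1 in the order met when following the orientation;
   between arc k and arc k+1 (mod n) there is a transition: a cusp traversed
   upward, a cusp traversed downward, or passing under a crossing whose
   over-arc is o, going from the right side of the oriented over-strand to its
   left side (b = true) or from left to right (b = false). *)
Inductive transition (n : nat) :=
  | TUp
  | TDown
  | TUnder of 'I_n & bool.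

Record front := Front {
  narcs : nat;
  narcs_pos : 0 < narcs;
  ftr : 'I_narcs -> transition narcs }.

Section Colorings.
Variable D : front.
Variable Y : finType.
Variables (op : Y -> Y -> Y) (u d : Y -> Y).

Definition coloring_at (col : {ffun 'I_(narcs D) -> Y}) (k : 'I_(narcs D)) : bool :=
  let nxt := col (ordS k) in
  match ftr k with
  | TUp => nxt == u (col k)
  | TDown => nxt == d (col k)
  | TUnder o true => nxt == op (col k) (col o)
  | TUnder o false => col k == op nxt (col o)
  end.

(* Hom(GLR(K), Y), identified with the colorings of the diagram *)
Definition Hom : {set {ffun 'I_(narcs D) -> Y}} :=
  [set col | [forall k, coloring_at col k]].

Definition Col : nat := #|Hom|.
End Colorings.

Definition Lift (D : front) (X : finType) (op : X -> X -> X) (u d : X -> X)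
  (psi : {ffun 'I_(narcs D) -> tX op}) : {set {ffun 'I_(narcs D) -> X}} :=
  [set phi in Hom D op u d | [ffun k => bpi op (phi k)] == psi].
Arguments Lift D [X] op u d psi.
Arguments bpi [X] op x.
Arguments top [X] op A B.
Arguments tu [X] op u A.
Arguments td [X] op d A.
Arguments rep [X] op A.
Arguments tX [X] op.

(* Main.v *)
Require Import Defs.
From mathcomp Require Import all_boot.
Set Implicit Arguments.
Unset Strict Implicit.
Unset Printing Implicit Defensive.

Section Aux.
Variables (X : finType) (op : X -> X -> X) (u d : X -> X).
Hypothesis HGL : is_GLrack op u d.
Local Notation Dl := (Delta op).

Lemma distr x y z : op (op x y) z = op (op x z) (op y z).
Proof. exact: HGL.1.2. Qed.

Lemma op_inj y : injective (fun x => op x y).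
Proof. exact: bij_inj (HGL.1.1 y). Qed.

Lemma opD x y : op x (Dl y) = op x y.
Proof.
have [g gK Kg] := HGL.1.1 y.
have E : op (g x) y = x := Kg x.
by rewrite -E /Delta (distr (g x) y y).
Qed.

Lemma opiterD x y k : op x (iter k Dl y) = op x y.
Proof. by elim: k => //= k IH; rewrite opD. Qed.

Lemma Delta_inj : injective Dl.
Proof. apply: (can_inj (g := fun x => u (d x))) => x; exact: (HGL.2.1 x).1. Qed.

Lemma Dop a b : op (Dl a) b = Dl (op a b).
Proof. by rewrite /Delta distr. Qed.

Lemma iterDop k a b : op (iter k Dl a) b = iter k Dl (op a b).
Proof. by elim: k => //= k IH; rewrite Dop IH. Qed.

Lemma iterDop2 k a b : op (iter k Dl a) (iter k Dl b) = iter k Dl (op a b).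
Proof. by rewrite opiterD iterDop. Qed.

Lemma Du x : Dl (u x) = u (Dl x).
Proof. by rewrite /Delta (HGL.2.2.2 _ _).1 (HGL.2.2.1 _ _).1. Qed.

Lemma Dd x : Dl (d x) = d (Dl x).
Proof. by rewrite /Delta (HGL.2.2.2 _ _).2 (HGL.2.2.1 _ _).2. Qed.

Lemma iter_u k x : iter k Dl (u x) = u (iter k Dl x).
Proof. by elim: k => //= k ->; rewrite Du. Qed.

Lemma iter_d k x : iter k Dl (d x) = d (iter k Dl x).
Proof. by elim: k => //= k ->; rewrite Dd. Qed.

Lemma bpiP a b : bpi op a = bpi op b <-> fconnect Dl a b.
Proof.
split.
- move=> E. have : b \in block op b by rewrite inE connect0.
  by have := congr1 val E => /= <-; rewrite inE.
- move=> ab; apply: val_inj => /=; apply/setP => z; rewrite !inE.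
  apply/idP/idP => H.
  + by apply: connect_trans H; rewrite (fconnect_sym Delta_inj).
  + exact: connect_trans ab H.
Qed.

Lemma bpi_iter k a : bpi op (iter k Dl a) = bpi op a.
Proof. by apply/bpiP; rewrite (fconnect_sym Delta_inj) fconnect_iter. Qed.

Lemma bpi_rep (A : tX op) : bpi op (rep op A) = A.
Proof. apply: val_inj => /=; apply/esym/eqP; exact: (xchooseP (tX_rep_ex A)). Qed.

Lemma bpi_eq_iter a b : bpi op a = bpi op b -> b = iter (findex Dl a b) Dl a.
Proof. by move/bpiP => H; rewrite iter_findex. Qed.

Lemma op_bpi x a b : bpi op a = bpi op b -> op x a = op x b.
Proof. by move/bpi_eq_iter ->; rewrite opiterD. Qed.

Lemma bpi_op a a' b b' : bpi op a = bpi op a' -> bpi op b = bpi op b' ->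
  bpi op (op a b) = bpi op (op a' b').
Proof.
move=> /bpi_eq_iter -> Hb; rewrite -(op_bpi _ Hb) iterDop; exact/esym/bpi_iter.
Qed.

Lemma bpi_u a a' : bpi op a = bpi op a' -> bpi op (u a) = bpi op (u a').
Proof. by move/bpi_eq_iter ->; rewrite -iter_u bpi_iter. Qed.

Lemma bpi_d a a' : bpi op a = bpi op a' -> bpi op (d a) = bpi op (d a').
Proof. by move/bpi_eq_iter ->; rewrite -iter_d bpi_iter. Qed.

Lemma top_bpi a b : top op (bpi op a) (bpi op b) = bpi op (op a b).
Proof. by apply: bpi_op; rewrite bpi_rep. Qed.

Lemma tu_bpi a : tu op u (bpi op a) = bpi op (u a).
Proof. by apply: bpi_u; rewrite bpi_rep. Qed.

Lemma td_bpi a : td op d (bpi op a) = bpi op (d a).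
Proof. by apply: bpi_d; rewrite bpi_rep. Qed.

Variable D : front.

Lemma hom_proj phi : phi \in Hom D op u d ->
  [ffun k => bpi op (phi k)] \in Hom D (top op) (tu op u) (td op d).
Proof.
rewrite !inE => /forallP H; apply/forallP => k; move: (H k).
rewrite /coloring_at !ffunE.
case: (ftr k) => [||o []] /= /eqP E; apply/eqP; rewrite ?ffunE;
  by rewrite E ?tu_bpi ?td_bpi ?top_bpi.
Qed.

Lemma lift_iter psi phi0 k : phi0 \in Lift D op u d psi ->
  [ffun i => iter k Dl (phi0 i)] \in Lift D op u d psi.
Proof.
rewrite !inE => /andP [/forallP H /eqP Hp]; apply/andP; split.
- apply/forallP => i; move: (H i); rewrite /coloring_at !ffunE.
  case: (ftr i) => [||o []] /= /eqP E; apply/eqP; rewrite ?ffunE;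
    by rewrite E ?iter_u ?iter_d ?iterDop2.
- apply/eqP/ffunP => i; rewrite -Hp !ffunE; exact: bpi_iter.
Qed.

Lemma lift_uniq psi phi1 phi2 : phi1 \in Lift D op u d psi ->
  phi2 \in Lift D op u d psi -> phi1 (Ordinal (narcs_pos D)) = phi2 (Ordinal (narcs_pos D)) ->
  phi1 = phi2.
Proof.
rewrite !inE => /andP [/forallP H1 /eqP P1] /andP [/forallP H2 /eqP P2] E0.
have B : forall i, bpi op (phi1 i) = bpi op (phi2 i).
  by move=> i; have := erefl (psi i); rewrite -{1}P1 -P2 !ffunE.
have step : forall k, phi1 k = phi2 k -> phi1 (ordS k) = phi2 (ordS k).
  move=> k Ek; move: (H1 k) (H2 k); rewrite /coloring_at.
  case: (ftr k) => [||o []] /= /eqP F1 /eqP F2.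
  - by rewrite F1 F2 Ek.
  - by rewrite F1 F2 Ek.
  - by rewrite F1 F2 Ek (op_bpi _ (B o)).
  - apply: (@op_inj (phi1 o)) => /=; rewrite -F1 Ek F2; exact: op_bpi.
have All : forall m (Hm : m < narcs D), phi1 (Ordinal Hm) = phi2 (Ordinal Hm).
  elim=> [|m IH] Hm.
  - by rewrite (_ : Ordinal Hm = Ordinal (narcs_pos D)) //; apply: val_inj.
  - have := step _ (IH (ltnW Hm)).
    rewrite (_ : ordS (Ordinal (ltnW Hm)) = Ordinal Hm) //; apply: val_inj => /=.
    exact: modn_small.
apply/ffunP => i; have := All _ (ltn_ord i).
by rewrite (_ : Ordinal (ltn_ord i) = i) //; apply: val_inj.
Qed.

End Aux.

Theorem theorem3p11 (D : front) (X : finType) (op : X -> X -> X) (u d : X -> X)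
  (c : nat) (HGL : is_GLrack op u d) (Hblock : is_block op c) :
  (forall phi, phi \in Hom D op u d ->
     [ffun k => bpi op (phi k)] \in Hom D (top op) (tu op u) (td op d)) /\
  Col D op u d = \sum_(psi in Hom D (top op) (tu op u) (td op d)) #|Lift D op u d psi| /\
  (forall psi, psi \in Hom D (top op) (tu op u) (td op d) ->
     #|Lift D op u d psi| = 0 \/ #|Lift D op u d psi| = c).
Proof.
split; first exact: hom_proj.
split.
- rewrite /Col -sum1_card.
  rewrite (partition_big (fun phi : {ffun 'I_(narcs D) -> X} => [ffun k => bpi op (phi k)])
             (mem (Hom D (top op) (tu op u) (td op d)))) /=; last by move=> phi; exact: hom_proj.
  apply: eq_bigr => psi _; rewrite -sum1_card; apply: eq_bigl => phi.
  by rewrite !inE.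
- move=> psi _.
  case: (set_0Vmem (Lift D op u d psi)) => [-> | [phi0 H0]]; first by left; rewrite cards0.
  right.
  set a0 := Ordinal (narcs_pos D).
  set x0 := phi0 a0.
  have Hc : order (Delta op) x0 = c := Hblock x0.
  pose g (k : 'I_c) := [ffun i => iter k (Delta op) (phi0 i)].
  have ginj : injective g.
    move=> k1 k2 /ffunP /(_ a0); rewrite !ffunE => E.
    apply: val_inj => /=.
    have o1 : k1 < order (Delta op) (phi0 a0) by rewrite Hblock.
    have o2 : k2 < order (Delta op) (phi0 a0) by rewrite Hblock.
    by rewrite -(findex_iter o1) E findex_iter.
  suff EL : Lift D op u d psi =i g @: 'I_c by rewrite (eq_card EL) card_imset // card_ord.
    move=> phi; apply/idP/imsetP.
    + move=> Hphi.
      have Hb : bpi op x0 = bpi op (phi a0).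
        move: H0 Hphi; rewrite !inE => /andP [_ /eqP P1] /andP [_ /eqP P2].
        by have := erefl (psi a0); rewrite -{1}P1 -P2 !ffunE.
      have Hk : findex (Delta op) x0 (phi a0) < c.
        by rewrite -Hc; apply: findex_max; apply/(bpiP HGL).
      exists (Ordinal Hk); first by [].
      apply: (lift_uniq HGL Hphi (lift_iter HGL _ H0)).
      by rewrite ffunE /= iter_findex //; apply/(bpiP HGL).
    + by move=> [k _ ->]; exact: lift_iter.
Qed.
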